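(* With $Z_L(t)=\partial z_L(t)/\partial L$, we have $\lim_{L\to\infty}Z_L(L)=-1$ and $\lim_{L\to\infty}Z_L(L/2)=1/2$.
   Context: For $\alpha\in(0,1/\sqrt2)$ let $L_\alpha=\pi/\mathrm{AGM}(\alpha,\tfrac12\sqrt{1+2\alpha^2})$; $\alpha\mapsto L_\alpha$ is a decreasing bijection from $(0,1/\sqrt2)$ onto $(\pi\sqrt2,\infty)$. For $L>\pi\sqrt2$ let $\alpha$ satisfy $L_\alpha=L$ and let $x_0>y_0>0$ satisfy $x_0^2+y_0^2=1$, $x_0y_0=\alpha^2$. Let $(x_L,y_L,z_L)(t)$ solve $x'=-xz$, $y'=yz$, $z'=x^2-y^2$ ($'=d/dt$) with initial value $(x_0,y_0,0)$. *)

(* Defs.v *)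
From Stdlib Require Import Reals Lra.
From Coquelicot Require Import Coquelicot.
Open Scope R_scope.

Fixpoint agm_seq (a b : R) (n : nat) : R * R :=
  match n with
  | O => (a, b)
  | S m => let p := agm_seq a b m in ((fst p + snd p) / 2, sqrt (fst p * snd p))
  end.

Definition AGM (a b : R) : R := real (Lim_seq (fun n => fst (agm_seq a b n))).

Definition Lalpha (alpha : R) : R :=
  PI / AGM alpha (sqrt (1 + 2 * alpha ^ 2) / 2).

Definition solves_system (x y z : R -> R) (x0 y0 : R) : Prop :=
  x 0 = x0 /\ y 0 = y0 /\ z 0 = 0 /\
  (forall t, is_derive x t (- (x t * z t))) /\
  (forall t, is_derive y t (y t * z t)) /\
  (forall t, is_derive z t (x t ^ 2 - y t ^ 2)).

Definition is_solution_family (xs ys zs : R -> R -> R) : Prop :=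
  forall L, PI * sqrt 2 < L ->
    exists alpha x0 y0,
      0 < alpha < / sqrt 2 /\ Lalpha alpha = L /\
      x0 > y0 /\ y0 > 0 /\ x0 ^ 2 + y0 ^ 2 = 1 /\ x0 * y0 = alpha ^ 2 /\
      solves_system (xs L) (ys L) (zs L) x0 y0.

Definition ZL (zs : R -> R -> R) (L t : R) : R := Derive (fun M => zs M t) L.

(* Main.v *)
Require Import Defs.
From Stdlib Require Import Reals Lra Psatz ZArith Lia.
From Coquelicot Require Import Coquelicot.
Open Scope R_scope.

Lemma deriv_cont (f : R -> R) (x l : R) : is_derive f x l -> continuity_pt f x.
Proof.
  intro H. apply derivable_continuous_pt. exists l. apply is_derive_Reals; exact H.
Qed.

Lemma mvt_bound (f df : R -> R) (a b K : R) :
  (forall x, is_derive f x (df x)) ->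
  (forall x, Rmin a b <= x <= Rmax a b -> Rabs (df x) <= K) ->
  Rabs (f b - f a) <= K * Rabs (b - a).
Proof.
  intros Hd Hb.
  destruct (MVT_gen f a b df) as [c [Hc Hfc]].
  - intros; apply Hd.
  - intros; eapply deriv_cont; apply Hd.
  - rewrite Hfc, Rabs_mult. apply Rmult_le_compat_r. apply Rabs_pos. apply Hb; exact Hc.
Qed.

Lemma deriv0_const (f : R -> R) : (forall x, is_derive f x 0) -> forall t, f t = f 0.
Proof.
  intros Hd t. assert (H := mvt_bound f (fun _ => 0) 0 t 0 Hd).
  assert (Rabs (f t - f 0) <= 0 * Rabs (t - 0)) by (apply H; intros; rewrite Rabs_R0; lra).
  assert (Rabs (f t - f 0) = 0) by (pose proof (Rabs_pos (f t - f 0)); nra).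
  apply Rabs_eq_0 in H1. lra.
Qed.

Lemma deriv_nonpos_decr (f df : R -> R) (a b : R) :
  (forall x, is_derive f x (df x)) -> (forall x, df x <= 0) -> a <= b -> f b <= f a.
Proof.
  intros Hd Hn Hab.
  destruct (MVT_gen f a b df) as [c [Hc Hfc]].
  - intros; apply Hd.
  - intros; eapply deriv_cont; apply Hd.
  - assert (df c * (b - a) <= 0). { specialize (Hn c). nra. } lra.
Qed.

Lemma gronwall0 (E dE : R -> R) (C : R) :
  (forall s, is_derive E s (dE s)) -> (forall s, 0 <= E s) ->
  (forall s, Rabs (dE s) <= C * E s) -> E 0 = 0 -> forall s, E s = 0.
Proof.
  intros Hd Hp Hb H0 s.
  destruct (Rle_or_lt 0 s) as [Hs|Hs].
  - set (f := fun t => E t * exp (- C * t)).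
    assert (Hf : forall t, is_derive f t (dE t * exp (- C * t) + E t * (- C * exp (- C * t)))).
    { intro t. unfold f. auto_derive. exists (dE t); apply Hd.
      replace (Derive (fun x : R => E x) t) with (dE t) by (symmetry; apply is_derive_unique; apply Hd). ring. }
    assert (f s <= f 0).
    { apply (deriv_nonpos_decr f _ 0 s Hf); auto. intro t.
      specialize (Hb t). pose proof (exp_pos (- C * t)). 
      assert (dE t <= C * E t) by (apply Rabs_le_between in Hb; lra). nra. }
    unfold f in H. rewrite H0 in H. rewrite Rmult_0_l in H.
    pose proof (exp_pos (- C * s)). pose proof (Hp s). nra.
  - set (f := fun t => - (E t * exp (C * t))).
    assert (Hf : forall t, is_derive f t (- (dE t * exp (C * t) + E t * (C * exp (C * t))))).
    { intro t. unfold f. auto_derive. exists (dE t); apply Hd.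
      replace (Derive (fun x : R => E x) t) with (dE t) by (symmetry; apply is_derive_unique; apply Hd). ring. }
    assert (f 0 <= f s).
    { apply (deriv_nonpos_decr f _ s 0 Hf); try lra. intro t.
      specialize (Hb t). pose proof (exp_pos (C * t)).
      assert (- (C * E t) <= dE t) by (apply Rabs_le_between in Hb; lra). nra. }
    unfold f in H. rewrite H0 in H. rewrite Rmult_0_l in H.
    pose proof (exp_pos (C * s)). pose proof (Hp s). nra.
Qed.
Lemma Derive_eq (f df : R -> R) : (forall s, is_derive f s (df s)) -> forall s, Derive f s = df s.
Proof. intros H s. apply is_derive_unique. apply H. Qed.

Ltac exd := repeat match goal with
  | |- _ /\ _ => split | |- True => exact I
  | |- ex_derive _ _ => (eexists; solve [eauto]) end.

Lemma two_abs_le x y : 2 * Rabs (x * y) <= x ^ 2 + y ^ 2.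
Proof.
  rewrite Rabs_mult, <- (pow2_abs x), <- (pow2_abs y).
  pose proof (pow2_ge_0 (Rabs x - Rabs y)). nra.
Qed.

Definition hf (u : R) : R := -2 * u * (1 - u ^ 2).

Lemma uniq2 (u1 v1 u2 v2 G : R -> R) (C : R) :
  (forall s, is_derive u1 s (v1 s * G s)) ->
  (forall s, is_derive v1 s (hf (u1 s) * G s)) ->
  (forall s, is_derive u2 s (v2 s * G s)) ->
  (forall s, is_derive v2 s (hf (u2 s) * G s)) ->
  (forall s, 0 <= G s <= C) ->
  (forall s, Rabs (u1 s) <= 1) -> (forall s, Rabs (u2 s) <= 1) ->
  u1 0 = u2 0 -> v1 0 = v2 0 -> forall s, u1 s = u2 s /\ v1 s = v2 s.
Proof.
  intros H1 H2 H3 H4 HG Hu1 Hu2 E1 E2.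
  set (E := fun s => (u1 s - u2 s) ^ 2 + (v1 s - v2 s) ^ 2).
  set (dE := fun s => 2 * (u1 s - u2 s) * (v1 s * G s - v2 s * G s)
                     + 2 * (v1 s - v2 s) * (hf (u1 s) * G s - hf (u2 s) * G s)).
  assert (Hd : forall s, is_derive E s (dE s)).
  { intro s. unfold E, dE. auto_derive. exd.
    rewrite (Derive_eq u1 _ H1), (Derive_eq u2 _ H3), (Derive_eq v1 _ H2), (Derive_eq v2 _ H4).
    ring. }
  assert (HE : forall s, E s = 0).
  { apply (gronwall0 E dE (5 * C) Hd).
    - intro s; unfold E; apply Rplus_le_le_0_compat; apply pow2_ge_0.
    - intro s. unfold dE, E, hf.
      set (a := u1 s); set (b := u2 s); set (c := v1 s); set (d := v2 s); set (g := G s).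
      assert (Ha := Hu1 s); assert (Hb := Hu2 s); fold a in Ha; fold b in Hb.
      assert (HGs := HG s); fold g in HGs.
      apply Rabs_le_between in Ha; apply Rabs_le_between in Hb.
      set (k := -2 + 2 * (a * a + a * b + b * b)).
      assert (Hk : -2 <= k <= 4) by (unfold k; split; nra).
      replace (2 * (a - b) * (c * g - d * g) + 2 * (c - d) * (-2 * a * (1 - a ^ 2) * g - -2 * b * (1 - b ^ 2) * g))
        with (2 * g * ((a - b) * (c - d)) * (1 + k)) by (unfold k; ring).
      rewrite Rabs_mult, (Rabs_mult (2 * g)), (Rabs_mult 2 g). rewrite (Rabs_right 2) by lra. rewrite (Rabs_right g) by lra.
      assert (Rabs (1 + k) <= 5) by (apply Rabs_le; lra).
      pose proof (two_abs_le (a - b) (c - d)).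
      pose proof (Rabs_pos ((a - b) * (c - d))); pose proof (Rabs_pos (1 + k)).
      assert (g * Rabs (1 + k) <= C * 5) by (apply Rmult_le_compat; lra).
      nra.
    - unfold E. rewrite E1, E2. ring. }
  intro s. specialize (HE s). unfold E in HE. cbv beta in HE.
  pose proof (pow2_ge_0 (u1 s - u2 s)); pose proof (pow2_ge_0 (v1 s - v2 s)).
  split; apply Rminus_diag_uniq; nra.
Qed.

Notation an a b n := (fst (agm_seq a b n)).
Notation bn a b n := (snd (agm_seq a b n)).

Lemma agm_S a b n : agm_seq a b (S n) = ((an a b n + bn a b n) / 2, sqrt (an a b n * bn a b n)).
Proof. reflexivity. Qed.

Lemma agm_pos a b n : 0 < a -> 0 < b -> 0 < an a b n /\ 0 < bn a b n.
Proof.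
  intros Ha Hb. induction n as [|n IH]; simpl; [lra|].
  destruct IH as [H1 H2]. split; [lra|]. apply sqrt_lt_R0. nra.
Qed.

Lemma sqrt_le_am x y : 0 <= x -> 0 <= y -> sqrt (x * y) <= (x + y) / 2.
Proof.
  intros Hx Hy. rewrite sqrt_mult_alt by lra.
  pose proof (sqrt_sqrt x Hx); pose proof (sqrt_sqrt y Hy).
  pose proof (sqrt_pos x); pose proof (sqrt_pos y).
  pose proof (pow2_ge_0 (sqrt x - sqrt y)). nra.
Qed.

Lemma agm_ord a b n : 0 < a -> 0 < b -> bn a b (S n) <= an a b (S n).
Proof.
  intros Ha Hb. rewrite agm_S. simpl. destruct (agm_pos a b n Ha Hb).
  apply sqrt_le_am; lra.
Qed.

Lemma sqrt_between x y : 0 <= x <= y -> x <= sqrt (x * y) <= y.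
Proof.
  intros H. split.
  - rewrite <- (sqrt_square x) at 1 by lra. apply sqrt_le_1_alt. nra.
  - rewrite <- (sqrt_square y) at 2 by lra. apply sqrt_le_1_alt. nra.
Qed.

Lemma agm_mono a b n : 0 < a -> 0 < b ->
  an a b (S (S n)) <= an a b (S n) /\ bn a b (S n) <= bn a b (S (S n)) /\
  an a b (S (S n)) - bn a b (S (S n)) <= (an a b (S n) - bn a b (S n)) / 2.
Proof.
  intros Ha Hb. pose proof (agm_ord a b n Ha Hb). destruct (agm_pos a b (S n) Ha Hb).
  rewrite (agm_S a b (S n)). cbn [fst snd].
  pose proof (sqrt_between (bn a b (S n)) (an a b (S n))).
  rewrite Rmult_comm in H2. assert (0 <= bn a b (S n) <= an a b (S n)) by lra.
  specialize (H2 H3). repeat split; lra.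
Qed.

Lemma agm_gap a b n : 0 < a -> 0 < b ->
  0 <= an a b (S n) - bn a b (S n) <= (an a b 1 - bn a b 1) * (/2) ^ n.
Proof.
  intros Ha Hb. induction n as [|n IH].
  - pose proof (agm_ord a b 0 Ha Hb). simpl pow. lra.
  - pose proof (agm_ord a b (S n) Ha Hb). destruct (agm_mono a b n Ha Hb) as [_ [_ H3]].
    split; [lra|]. simpl pow. lra.
Qed.

Lemma agm_lim a b : 0 < a -> 0 < b ->
  is_lim_seq (fun n => an a b n) (AGM a b) /\ is_lim_seq (fun n => bn a b n) (AGM a b) /\
  bn a b 1 <= AGM a b <= an a b 1.
Proof.
  intros Ha Hb.
  set (A := fun n => an a b (S n)). set (B := fun n => bn a b (S n)).
  assert (HAd : forall n, A (S n) <= A n) by (intro n; apply (agm_mono a b n Ha Hb)).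
  assert (HBi : forall n, B n <= B (S n)) by (intro n; apply (agm_mono a b n Ha Hb)).
  assert (HB0 : forall n, B O <= B n).
  { induction n; [lra|]. specialize (HBi n). lra. }
  assert (HA0 : forall n, A n <= A O).
  { induction n; [lra|]. specialize (HAd n). lra. }
  assert (HBA : forall n, B n <= A n) by (intro n; apply (agm_ord a b n Ha Hb)).
  assert (Hex : ex_finite_lim_seq A).
  { apply (ex_finite_lim_seq_decr A (B O)); auto. intro n. specialize (HB0 n); specialize (HBA n). lra. }
  destruct Hex as [l Hl].
  assert (HL : AGM a b = l).
  { unfold AGM. rewrite <- Lim_seq_incr_1. fold A. rewrite (is_lim_seq_unique _ _ Hl). reflexivity. }
  rewrite HL.
  assert (Hgap : is_lim_seq (fun n => A n - B n) 0).
  { apply (is_lim_seq_le_le (fun _ => 0) _ (fun n => (an a b 1 - bn a b 1) * (/2) ^ n)).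
    - intro n. apply (agm_gap a b n Ha Hb).
    - apply is_lim_seq_const.
    - replace (Finite 0) with (Rbar_mult (an a b 1 - bn a b 1) 0) by (simpl; f_equal; ring).
      apply is_lim_seq_scal_l. apply is_lim_seq_geom. rewrite Rabs_right; lra. }
  assert (HBl : is_lim_seq B l).
  { apply (is_lim_seq_ext (fun n => A n - (A n - B n))). intro; ring.
    replace l with (l - 0) by ring. apply is_lim_seq_minus'; auto. }
  split; [|split].
  - apply is_lim_seq_incr_1. exact Hl.
  - apply is_lim_seq_incr_1. exact HBl.
  - split.
    + apply (is_lim_seq_le (fun _ => B O) B (B O) l); auto. apply is_lim_seq_const.
    + apply (is_lim_seq_le A (fun _ => A O) l (A O)); auto. apply is_lim_seq_const.
Qed.

Lemma agm_pos_lim a b : 0 < a -> 0 < b -> 0 < AGM a b.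
Proof.
  intros Ha Hb. destruct (agm_lim a b Ha Hb) as [_ [_ [H _]]].
  destruct (agm_pos a b 1 Ha Hb). lra.
Qed.

Lemma agm_le_min a b : 0 < a -> 0 < b -> Rmin a b <= AGM a b.
Proof.
  intros Ha Hb. destruct (agm_lim a b Ha Hb) as [_ [_ [H _]]].
  simpl in H. eapply Rle_trans; [|exact H].
  apply Rmin_case_strong; intro Hm.
  - rewrite <- (sqrt_square a) at 1 by lra. apply sqrt_le_1_alt. nra.
  - rewrite <- (sqrt_square b) at 1 by lra. apply sqrt_le_1_alt. nra.
Qed.

Lemma agm_le_am a b : 0 < a -> 0 < b -> AGM a b <= (a + b) / 2.
Proof. intros Ha Hb. destruct (agm_lim a b Ha Hb) as [_ [_ [_ H]]]. exact H. Qed.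

Lemma agm_seq_mono a b a' b' n : 0 < a -> 0 < b -> a <= a' -> b <= b' ->
  an a b n <= an a' b' n /\ bn a b n <= bn a' b' n.
Proof.
  intros Ha Hb Ha' Hb'. induction n as [|n IH]; simpl; [lra|].
  destruct IH. destruct (agm_pos a b n Ha Hb). split; [lra|].
  apply sqrt_le_1_alt. apply Rmult_le_compat; lra.
Qed.

Lemma agm_monotone a b a' b' : 0 < a -> 0 < b -> a <= a' -> b <= b' -> AGM a b <= AGM a' b'.
Proof.
  intros Ha Hb Ha' Hb'.
  destruct (agm_lim a b Ha Hb) as [H1 _]. destruct (agm_lim a' b' ltac:(lra) ltac:(lra)) as [H2 _].
  apply (is_lim_seq_le _ _ _ _ (fun n => proj1 (agm_seq_mono a b a' b' n Ha Hb Ha' Hb')) H1 H2).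
Qed.

Lemma agm_seq_hom k a b n : 0 < k -> 0 < a -> 0 < b ->
  an (k * a) (k * b) n = k * an a b n /\ bn (k * a) (k * b) n = k * bn a b n.
Proof.
  intros Hk Ha Hb. induction n as [|n IH]; simpl; [lra|].
  destruct IH as [H1 H2]. rewrite H1, H2. split; [lra|].
  replace (k * an a b n * (k * bn a b n)) with ((k * k) * (an a b n * bn a b n)) by ring.
  rewrite sqrt_mult_alt by nra. rewrite sqrt_square by lra. reflexivity.
Qed.

Lemma agm_hom k a b : 0 < k -> 0 < a -> 0 < b -> AGM (k * a) (k * b) = k * AGM a b.
Proof.
  intros Hk Ha Hb.
  destruct (agm_lim a b Ha Hb) as [H1 _].
  destruct (agm_lim (k * a) (k * b) ltac:(nra) ltac:(nra)) as [H2 _].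
  assert (H3 : is_lim_seq (fun n => an (k * a) (k * b) n) (k * AGM a b)).
  { apply (is_lim_seq_ext (fun n => k * an a b n)).
    intro n; symmetry; apply (agm_seq_hom k a b n Hk Ha Hb).
    apply (is_lim_seq_scal_l _ k (AGM a b)) in H1. exact H1. }
  pose proof (is_lim_seq_unique _ _ H2). pose proof (is_lim_seq_unique _ _ H3).
  rewrite H in H0. injection H0; auto.
Qed.

Definition Q (a b x : R) : R := (a * cos x) ^ 2 + (b * sin x) ^ 2.

Lemma Q_bounds a b x : 0 < b <= a -> b ^ 2 <= Q a b x <= a ^ 2.
Proof.
  intros H. unfold Q. pose proof (sin2_cos2 x). unfold Rsqr in H0.
  pose proof (pow2_ge_0 (cos x)); pose proof (pow2_ge_0 (sin x)).
  assert (0 <= a ^ 2 - b ^ 2) by nra.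
  pose proof (Rmult_le_pos _ _ H3 H1). pose proof (Rmult_le_pos _ _ H3 H2).
  split; nra.
Qed.

Lemma Q_pos a b x : 0 < a -> 0 < b -> 0 < Q a b x.
Proof.
  intros Ha Hb. unfold Q. pose proof (sin2_cos2 x). unfold Rsqr in H.
  destruct (Rle_or_lt (b) (a)).
  - pose proof (Q_bounds a b x). unfold Q in H1. nra.
  - pose proof (Q_bounds b a (x + PI/2)). unfold Q in H1. rewrite cos_plus, sin_plus, cos_PI2, sin_PI2 in H1.
    replace ((b * (cos x * 0 - sin x * 1)) ^ 2 + (a * (sin x * 0 + cos x * 1)) ^ 2) with
      ((a * cos x) ^ 2 + (b * sin x) ^ 2) in H1 by ring. nra.
Qed.

Lemma invsqrtQ_cont a b x : 0 < a -> 0 < b -> continuous (fun y => / sqrt (Q a b y)) x.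
Proof.
  intros Ha Hb. apply (@ex_derive_continuous R_AbsRing R_NormedModule). unfold Q. auto_derive.
  pose proof (Q_pos a b x Ha Hb). unfold Q in H. split; [lra|split; [|exact I]].
  apply Rgt_not_eq. apply sqrt_lt_R0. lra.
Qed.

Lemma invsqrtQ_ex a b u v : 0 < a -> 0 < b -> ex_RInt (fun y => / sqrt (Q a b y)) u v.
Proof. intros Ha Hb. apply (@ex_RInt_continuous R_CompleteNormedModule). intros; apply invsqrtQ_cont; auto. Qed.

Definition Ig (a b : R) : R := RInt (fun y => / sqrt (Q a b y)) 0 PI.

Definition phi1 (a b x : R) : R := x + RInt (fun s => a * b / Q a b s) 0 x.
Definition Cf (a b x : R) : R := (a * cos x ^ 2 - b * sin x ^ 2) / sqrt (Q a b x).
Definition Sf (a b x : R) : R := (a + b) * sin x * cos x / sqrt (Q a b x).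

Lemma abQ_cont a b x : 0 < a -> 0 < b -> continuous (fun s => a * b / Q a b s) x.
Proof.
  intros Ha Hb. apply (@ex_derive_continuous R_AbsRing R_NormedModule). unfold Q. auto_derive.
  pose proof (Q_pos a b x Ha Hb). unfold Q in H. lra.
Qed.

Lemma phi1_deriv a b x : 0 < a -> 0 < b -> is_derive (phi1 a b) x (1 + a * b / Q a b x).
Proof.
  intros Ha Hb. unfold phi1. apply (is_derive_plus (fun x => x) (fun x => RInt (fun s => a * b / Q a b s) 0 x)).
  - apply (is_derive_id x).
  - apply (is_derive_RInt (fun s => a * b / Q a b s) _ 0 x).
    + apply filter_forall. intro y. apply (@RInt_correct R_CompleteNormedModule).
      apply (@ex_RInt_continuous R_CompleteNormedModule). intros; apply abQ_cont; auto.
    + apply abQ_cont; auto.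
Qed.

Lemma Cf_deriv a b x : 0 < a -> 0 < b -> is_derive (Cf a b) x (- (1 + a * b / Q a b x) * Sf a b x).
Proof.
  intros Ha Hb. unfold Cf, Sf. pose proof (Q_pos a b x Ha Hb) as HQ. unfold Q in *. auto_derive.
  { split; [lra|split; [|exact I]]. apply Rgt_not_eq, sqrt_lt_R0; lra. }
  replace (a * cos x * (a * cos x * 1) + b * sin x * (b * sin x * 1)) with ((a * cos x) ^ 2 + (b * sin x) ^ 2) by ring.
  rewrite sqrt_sqrt by lra.
  assert (Hr : 0 < sqrt ((a * cos x) ^ 2 + (b * sin x) ^ 2)) by (apply sqrt_lt_R0; lra).
  pose proof (sin2_cos2 x) as Hcs. unfold Rsqr in Hcs.
  replace (1 + a * b / ((a * cos x) ^ 2 + (b * sin x) ^ 2)) with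
    (((a * cos x) ^ 2 + (b * sin x) ^ 2 + a * b * (sin x * sin x + cos x * cos x)) / ((a * cos x) ^ 2 + (b * sin x) ^ 2))
    by (rewrite Hcs; field; lra).
  field. split; lra.
Qed.

Lemma Sf_deriv a b x : 0 < a -> 0 < b -> is_derive (Sf a b) x ((1 + a * b / Q a b x) * Cf a b x).
Proof.
  intros Ha Hb. unfold Cf, Sf. pose proof (Q_pos a b x Ha Hb) as HQ. unfold Q in *. auto_derive.
  { split; [lra|split; [|exact I]]. apply Rgt_not_eq, sqrt_lt_R0; lra. }
  replace (a * cos x * (a * cos x * 1) + b * sin x * (b * sin x * 1)) with ((a * cos x) ^ 2 + (b * sin x) ^ 2) by ring.
  rewrite sqrt_sqrt by lra.
  assert (Hr : 0 < sqrt ((a * cos x) ^ 2 + (b * sin x) ^ 2)) by (apply sqrt_lt_R0; lra).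
  pose proof (sin2_cos2 x) as Hcs. unfold Rsqr in Hcs.
  replace (1 + a * b / ((a * cos x) ^ 2 + (b * sin x) ^ 2)) with
    (((a * cos x) ^ 2 + (b * sin x) ^ 2 + a * b * (sin x * sin x + cos x * cos x)) / ((a * cos x) ^ 2 + (b * sin x) ^ 2))
    by (rewrite Hcs; field; lra).
  field. split; lra.
Qed.

Lemma phi1_0 a b : phi1 a b 0 = 0.
Proof. unfold phi1. rewrite RInt_point. unfold zero; simpl. ring. Qed.

Lemma phi1_cs a b x : 0 < a -> 0 < b -> cos (phi1 a b x) = Cf a b x /\ sin (phi1 a b x) = Sf a b x.
Proof.
  intros Ha Hb.
  set (E := fun x => (cos (phi1 a b x) - Cf a b x) ^ 2 + (sin (phi1 a b x) - Sf a b x) ^ 2).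
  assert (HD : forall x, is_derive E x 0).
  { intro y. unfold E.
    pose proof (phi1_deriv a b y Ha Hb) as H1.
    pose proof (Cf_deriv a b y Ha Hb) as H2.
    pose proof (Sf_deriv a b y Ha Hb) as H3.
    auto_derive.
    { repeat split; eexists; eauto. }
    replace (Derive (fun x => phi1 a b x) y) with (1 + a * b / Q a b y) by (symmetry; apply is_derive_unique; auto).
    replace (Derive (fun x => Cf a b x) y) with (- (1 + a * b / Q a b y) * Sf a b y) by (symmetry; apply is_derive_unique; auto).
    replace (Derive (fun x => Sf a b x) y) with ((1 + a * b / Q a b y) * Cf a b y) by (symmetry; apply is_derive_unique; auto).
    ring. }
  pose proof (deriv0_const E HD x) as HE.
  assert (HE0 : E 0 = 0).
  { unfold E. rewrite phi1_0, cos_0, sin_0. unfold Cf, Sf, Q. rewrite cos_0, sin_0.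
    replace ((a * 1) ^ 2 + (b * 0) ^ 2) with (a * a) by ring. rewrite sqrt_square by lra.
    field. lra. }
  rewrite HE0 in HE. unfold E in HE.
  pose proof (pow2_ge_0 (cos (phi1 a b x) - Cf a b x)); pose proof (pow2_ge_0 (sin (phi1 a b x) - Sf a b x)).
  split; apply Rminus_diag_uniq; nra.
Qed.

Lemma phi1_cont a b : 0 < a -> 0 < b -> continuity (phi1 a b).
Proof. intros Ha Hb x. eapply deriv_cont. apply phi1_deriv; auto. Qed.

Lemma phi1_ge a b x : 0 < a -> 0 < b -> 0 <= x -> x <= phi1 a b x.
Proof.
  intros Ha Hb Hx.
  destruct (MVT_gen (phi1 a b) 0 x (fun y => 1 + a * b / Q a b y)) as [c [_ Hc]].
  - intros; apply phi1_deriv; auto.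
  - intros; eapply deriv_cont; apply phi1_deriv; auto.
  - rewrite phi1_0 in Hc. pose proof (Q_pos a b c Ha Hb).
    assert (0 <= a * b / Q a b c) by (apply Rle_mult_inv_pos; nra).
    nra.
Qed.

Lemma phi1_PI2 a b : 0 < a -> 0 < b -> phi1 a b (PI / 2) = PI.
Proof.
  intros Ha Hb.
  destruct (phi1_cs a b (PI / 2) Ha Hb) as [Hc Hs].
  assert (HS : Sf a b (PI / 2) = 0) by (unfold Sf; rewrite cos_PI2; field; 
     apply Rgt_not_eq, sqrt_lt_R0, Q_pos; auto).
  rewrite HS in Hs. destruct (sin_eq_0_0 _ Hs) as [k Hk].
  pose proof PI_RGT_0 as HPI.
  pose proof (phi1_ge a b (PI / 2) Ha Hb ltac:(lra)) as Hge.
  assert (Hk1 : (1 <= k)%Z).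
  { destruct (Z_lt_le_dec k 1) as [Hlt|]; auto. exfalso. assert (IZR k <= 0) by (apply IZR_le; lia). nra. }
  assert (Hk2 : (k <= 1)%Z).
  { destruct (Z_le_gt_dec k 1) as [|Hgt]; auto. exfalso.
    assert (2 <= IZR k) by (apply IZR_le; lia).
    destruct (IVT_gen (phi1 a b) 0 (PI / 2) (3 * PI / 2) (phi1_cont a b Ha Hb)) as [y [Hy Hy2]].
    { rewrite phi1_0, Hk. rewrite Rmin_left by nra. rewrite Rmax_right by nra. split; nra. }
    rewrite Rmin_left in Hy by lra. rewrite Rmax_right in Hy by lra.
    destruct (phi1_cs a b y Ha Hb) as [_ Hs2]. rewrite Hy2 in Hs2.
    replace (3 * PI / 2) with (PI / 2 + PI) in Hs2 by field.
    rewrite neg_sin, sin_PI2 in Hs2.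
    assert (0 <= Sf a b y).
    { unfold Sf. apply Rle_mult_inv_pos.
      - pose proof (sin_ge_0 y ltac:(lra) ltac:(lra)). pose proof (cos_ge_0 y ltac:(lra) ltac:(lra)).
        assert (0 <= sin y * cos y) by nra. nra.
      - apply sqrt_lt_R0, Q_pos; auto. }
    lra. }
  assert (k = 1%Z) by lia. subst k. rewrite Hk. simpl. ring.
Qed.

Lemma landen_pt a b y : 0 < a -> 0 < b ->
  (1 + a * b / Q a b y) * / sqrt (Q ((a + b) / 2) (sqrt (a * b)) (phi1 a b y)) = 2 * / sqrt (Q a b y).
Proof.
  intros Ha Hb. pose proof (Q_pos a b y Ha Hb) as HQ.
  assert (Hr : 0 < sqrt (Q a b y)) by (apply sqrt_lt_R0; lra).
  assert (HQ1 : Q ((a + b) / 2) (sqrt (a * b)) (phi1 a b y) = ((Q a b y + a * b) / (2 * sqrt (Q a b y))) ^ 2).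
  { unfold Q at 1. destruct (phi1_cs a b y Ha Hb) as [Hc Hs]. rewrite Hc, Hs.
    rewrite Rpow_mult_distr. rewrite (Rpow_mult_distr (sqrt (a * b))). rewrite pow2_sqrt by nra.
    unfold Cf, Sf.
    pose proof (sin2_cos2 y) as Hcs. unfold Rsqr in Hcs.
    replace (Q a b y + a * b) with ((a + b) * (a * cos y ^ 2 + b * sin y ^ 2))
      by (unfold Q; rewrite <- (Rmult_1_r (a * b)); rewrite <- Hcs; ring).
    field. lra. }
  rewrite HQ1. rewrite sqrt_pow2.
  2: { apply Rle_mult_inv_pos; nra. }
  assert (Hrr : sqrt (Q a b y) * sqrt (Q a b y) = Q a b y) by (apply sqrt_sqrt; lra).
  set (r := sqrt (Q a b y)) in *. clearbody r. rewrite <- Hrr. field. split; [lra|]. nra.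
Qed.

Lemma scalR (x y : R) : scal x y = x * y.
Proof. reflexivity. Qed.

Lemma Ig_half a b : 0 < a -> 0 < b -> Ig a b = 2 * RInt (fun y => / sqrt (Q a b y)) 0 (PI / 2).
Proof.
  intros Ha Hb. unfold Ig.
  pose proof (invsqrtQ_ex a b) as Hex.
  rewrite <- (RInt_Chasles (V := R_CompleteNormedModule) _ 0 (PI / 2) PI) by (apply Hex; auto).
  assert (H2 : RInt (fun y => / sqrt (Q a b y)) (PI / 2) PI = RInt (fun y => / sqrt (Q a b y)) 0 (PI / 2)).
  { pose proof (RInt_comp_lin (V := R_CompleteNormedModule) (fun y => / sqrt (Q a b y)) (-1) PI 0 (PI / 2)) as H.
    replace (-1 * 0 + PI) with PI in H by ring. replace (-1 * (PI / 2) + PI) with (PI / 2) in H by field.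
    specialize (H (Hex _ _ Ha Hb)).
    rewrite <- (opp_RInt_swap (V := R_CompleteNormedModule)) by (apply Hex; auto).
    rewrite <- H.
    rewrite (RInt_ext (V := R_CompleteNormedModule) _ (fun x => opp (/ sqrt (Q a b x)))).
    2: { intros x _. rewrite scalR. unfold opp; simpl. unfold Q.
         replace (-1 * x + PI) with (PI - x) by ring. rewrite sin_PI_x, cos_minus, cos_PI, sin_PI. replace ((a * (-1 * cos x + 0 * sin x)) ^ 2) with ((a * cos x) ^ 2) by ring. ring. }
    rewrite (RInt_opp (V := R_CompleteNormedModule) (fun x => / sqrt (Q a b x))) by (apply Hex; auto). unfold opp; simpl. ring. }
  rewrite H2. unfold plus; simpl. ring.
Qed.

Lemma landen a b : 0 < a -> 0 < b -> Ig a b = Ig ((a + b) / 2) (sqrt (a * b)).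
Proof.
  intros Ha Hb.
  assert (Ha1 : 0 < (a + b) / 2) by lra. assert (Hb1 : 0 < sqrt (a * b)) by (apply sqrt_lt_R0; nra).
  rewrite Ig_half by auto.
  unfold Ig.
  transitivity (RInt (fun y => / sqrt (Q ((a + b) / 2) (sqrt (a * b)) y)) (phi1 a b 0) (phi1 a b (PI / 2))).
  2: { rewrite phi1_0, (phi1_PI2 a b Ha Hb). reflexivity. }
  rewrite <- (RInt_comp (V := R_CompleteNormedModule) (fun y => / sqrt (Q ((a + b) / 2) (sqrt (a * b)) y)) (phi1 a b) (fun y => 1 + a * b / Q a b y)).
  - rewrite (RInt_ext (V := R_CompleteNormedModule) (fun y => scal (1 + a * b / Q a b y) (/ sqrt (Q ((a + b) / 2) (sqrt (a * b)) (phi1 a b y)))) (fun y => scal 2 (/ sqrt (Q a b y)))).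
    + rewrite (RInt_scal (V := R_CompleteNormedModule)) by (apply invsqrtQ_ex; auto). reflexivity.
    + intros x _. rewrite !scalR. apply landen_pt; auto.
  - intros; apply invsqrtQ_cont; auto.
  - intros x _. split. apply phi1_deriv; auto.
    apply (@ex_derive_continuous R_AbsRing R_NormedModule). unfold Q. auto_derive.
    pose proof (Q_pos a b x Ha Hb). unfold Q in H. lra.
Qed.

Lemma Ig_iter a b n : 0 < a -> 0 < b -> Ig a b = Ig (an a b n) (bn a b n).
Proof.
  intros Ha Hb. induction n as [|n IH]; [reflexivity|].
  rewrite IH. rewrite agm_S. cbn [fst snd]. destruct (agm_pos a b n Ha Hb). apply landen; auto.
Qed.

Lemma RInt_constR (c a b : R) : RInt (fun _ => c) a b = (b - a) * c.
Proof. rewrite RInt_const. reflexivity. Qed.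

Lemma Ig_bounds x y : 0 < y <= x -> PI / x <= Ig x y <= PI / y.
Proof.
  intros H. unfold Ig. pose proof PI_RGT_0.
  assert (Hb : forall t, y <= sqrt (Q x y t) <= x).
  { intro t. pose proof (Q_bounds x y t H). split.
    - assert (E : sqrt (y ^ 2) <= sqrt (Q x y t)) by (apply sqrt_le_1_alt; lra).
      rewrite sqrt_pow2 in E by lra. exact E.
    - assert (E : sqrt (Q x y t) <= sqrt (x ^ 2)) by (apply sqrt_le_1_alt; lra).
      rewrite sqrt_pow2 in E by lra. exact E. }
  assert (Hex : ex_RInt (fun t => / sqrt (Q x y t)) 0 PI) by (apply invsqrtQ_ex; lra).
  split.
  - replace (PI / x) with (RInt (fun _ => / x) 0 PI) by (rewrite RInt_constR, Rminus_0_r; reflexivity).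
    apply RInt_le; [lra| |exact Hex|].
    + apply ex_RInt_const.
    + intros t _. specialize (Hb t). apply Rinv_le_contravar; lra.
  - replace (PI / y) with (RInt (fun _ => / y) 0 PI) by (rewrite RInt_constR, Rminus_0_r; reflexivity).
    apply RInt_le; [lra|exact Hex| |].
    + apply ex_RInt_const.
    + intros t _. specialize (Hb t). apply Rinv_le_contravar; lra.
Qed.

Lemma gauss a b : 0 < a -> 0 < b -> Ig a b = PI / AGM a b.
Proof.
  intros Ha Hb. destruct (agm_lim a b Ha Hb) as [HA [HB _]].
  pose proof (agm_pos_lim a b Ha Hb) as HM.
  assert (Hlim : forall u : nat -> R, is_lim_seq u (AGM a b) -> is_lim_seq (fun n => PI / u (S n)) (PI / AGM a b)).
  { intros u Hu. apply is_lim_seq_incr_1 in Hu.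
    apply (is_lim_seq_inv _ (AGM a b)) in Hu; [|intro E; injection E; lra].
    apply (is_lim_seq_scal_l _ PI) in Hu. simpl in Hu. exact Hu. }
  assert (Hbd : forall n, PI / an a b (S n) <= Ig a b <= PI / bn a b (S n)).
  { intro n. rewrite (Ig_iter a b (S n) Ha Hb). apply Ig_bounds.
    pose proof (agm_ord a b n Ha Hb). destruct (agm_pos a b (S n) Ha Hb). lra. }
  apply Rle_antisym.
  - assert (H := is_lim_seq_le (fun _ => Ig a b) (fun n => PI / bn a b (S n)) (Ig a b) (PI / AGM a b)
                 (fun n => proj2 (Hbd n)) (is_lim_seq_const _) (Hlim _ HB)). exact H.
  - assert (H := is_lim_seq_le (fun n => PI / an a b (S n)) (fun _ => Ig a b) (PI / AGM a b) (Ig a b)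
                 (fun n => proj1 (Hbd n)) (Hlim _ HA) (is_lim_seq_const _)). exact H.
Qed.

Lemma conserv (x y z : R -> R) x0 y0 :
  solves_system x y z x0 y0 ->
  (forall t, x t * y t = x0 * y0) /\ (forall t, x t ^ 2 + y t ^ 2 + z t ^ 2 = x0 ^ 2 + y0 ^ 2).
Proof.
  intros [Hx0 [Hy0 [Hz0 [Hx [Hy Hz]]]]].
  split.
  - intro t. rewrite <- Hx0, <- Hy0.
    apply (deriv0_const (fun t => x t * y t)). intro s. auto_derive. exd.
    rewrite (Derive_eq x _ Hx), (Derive_eq y _ Hy). ring.
  - intro t. rewrite <- Hx0, <- Hy0.
    replace (x 0 ^ 2 + y 0 ^ 2) with (x 0 ^ 2 + y 0 ^ 2 + z 0 ^ 2) by (rewrite Hz0; ring).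
    apply (deriv0_const (fun t => x t ^ 2 + y t ^ 2 + z t ^ 2)). intro s. auto_derive. exd.
    rewrite (Derive_eq x _ Hx), (Derive_eq y _ Hy), (Derive_eq z _ Hz). ring.
Qed.

Lemma w_deriv (x y z : R -> R) x0 y0 :
  solves_system x y z x0 y0 -> x0 ^ 2 + y0 ^ 2 = 1 ->
  forall t, is_derive (fun t => x t ^ 2 - y t ^ 2) t (hf (z t)).
Proof.
  intros Hs H1 t. destruct (conserv x y z x0 y0 Hs) as [_ Hc].
  destruct Hs as [Hx0 [Hy0 [Hz0 [Hx [Hy Hz]]]]].
  auto_derive. exd. rewrite (Derive_eq x _ Hx), (Derive_eq y _ Hy).
  unfold hf. specialize (Hc t). rewrite H1 in Hc.
  replace (1 - z t ^ 2) with (x t ^ 2 + y t ^ 2) by lra. ring.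
Qed.

Definition bet (al : R) : R := sqrt (1 + 2 * al ^ 2) / 2.
Definition gf (al x : R) : R := 2 * sqrt (Q (bet al) al x).
Definition Phi (al x : R) : R := RInt (fun s => / gf al s) 0 x.

Lemma al2_lt al : 0 < al < / sqrt 2 -> al ^ 2 < 1 / 2.
Proof.
  intros [H1 H2]. pose proof (sqrt_lt_R0 2 ltac:(lra)) as Hs.
  assert (al * sqrt 2 < 1).
  { apply (Rmult_lt_compat_r (sqrt 2)) in H2; auto. rewrite Rinv_l in H2 by lra. exact H2. }
  pose proof (sqrt_sqrt 2 ltac:(lra)).
  assert (0 < al * sqrt 2) by (apply Rmult_lt_0_compat; lra).
  assert ((al * sqrt 2) ^ 2 < 1) by nra.
  replace ((al * sqrt 2) ^ 2) with (al ^ 2 * (sqrt 2 * sqrt 2)) in H4 by ring. rewrite H0 in H4. lra.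
Qed.

Lemma bet_facts al : 0 < al < / sqrt 2 -> 4 * bet al ^ 2 = 1 + 2 * al ^ 2 /\ al < bet al.
Proof.
  intros H. pose proof (al2_lt al H).
  assert (E : 4 * bet al ^ 2 = 1 + 2 * al ^ 2).
  { unfold bet. replace (4 * (sqrt (1 + 2 * al ^ 2) / 2) ^ 2) with ((sqrt (1 + 2 * al ^ 2)) ^ 2) by field.
    apply pow2_sqrt. nra. }
  split; auto.
  assert (0 <= bet al) by (unfold bet; pose proof (sqrt_pos (1 + 2 * al ^ 2)); lra).
  nra.
Qed.

Lemma gf_ge al x : 0 < al < / sqrt 2 -> 2 * al <= gf al x.
Proof.
  intros H. destruct (bet_facts al H) as [_ Hb].
  pose proof (Q_bounds (bet al) al x ltac:(lra)) as HQ.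
  unfold gf. assert (al <= sqrt (Q (bet al) al x)).
  { assert (E : sqrt (al ^ 2) <= sqrt (Q (bet al) al x)) by (apply sqrt_le_1_alt; lra).
    rewrite sqrt_pow2 in E by lra. exact E. }
  lra.
Qed.

Lemma ginv_cont al x : 0 < al < / sqrt 2 -> continuous (fun s => / gf al s) x.
Proof.
  intros H. destruct (bet_facts al H) as [_ Hb].
  apply (@ex_derive_continuous R_AbsRing R_NormedModule). unfold gf. unfold Q. auto_derive.
  pose proof (Q_pos (bet al) al x ltac:(lra) ltac:(lra)). unfold Q in H0. split; [lra|split; [|exact I]].
  assert (0 < sqrt ((bet al * cos x) ^ 2 + (al * sin x) ^ 2)) by (apply sqrt_lt_R0; lra).
  replace (bet al * cos x * (bet al * cos x * 1) + al * sin x * (al * sin x * 1)) with ((bet al * cos x) ^ 2 + (al * sin x) ^ 2) by ring.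
  lra.
Qed.

Lemma Phi_deriv al x : 0 < al < / sqrt 2 -> is_derive (Phi al) x (/ gf al x).
Proof.
  intros H. unfold Phi. apply (is_derive_RInt (fun s => / gf al s) _ 0 x).
  + apply filter_forall. intro y. apply (@RInt_correct R_CompleteNormedModule).
    apply (@ex_RInt_continuous R_CompleteNormedModule). intros; apply ginv_cont; auto.
  + apply ginv_cont; auto.
Qed.

Lemma Phi_PI al : 0 < al < / sqrt 2 -> Phi al PI = Lalpha al / 2.
Proof.
  intros H. destruct (bet_facts al H) as [_ Hb].
  unfold Phi. rewrite (RInt_ext (V := R_CompleteNormedModule) _ (fun s => scal (/ 2) (/ sqrt (Q (bet al) al s)))).
  2: { intros s _. rewrite scalR. unfold gf. rewrite Rinv_mult. reflexivity. }
  rewrite (RInt_scal (V := R_CompleteNormedModule)) by (apply invsqrtQ_ex; lra).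
  rewrite scalR. fold (Ig (bet al) al).
  rewrite landen by lra.
  rewrite (Rplus_comm (bet al) al).
  rewrite (Rmult_comm (bet al) al). rewrite <- landen by lra.
  rewrite gauss by lra. unfold Lalpha. fold (bet al). field.
  pose proof (agm_pos_lim al (bet al) ltac:(lra) ltac:(lra)). lra.
Qed.

Definition msq (al : R) : R := sqrt (1 - 2 * al ^ 2).

Lemma gf_sq al x : 0 < al < / sqrt 2 -> gf al x ^ 2 = 4 * ((bet al * cos x) ^ 2 + (al * sin x) ^ 2).
Proof.
  intros H. destruct (bet_facts al H) as [_ Hb]. unfold gf.
  rewrite Rpow_mult_distr, pow2_sqrt. unfold Q. ring.
  apply Rlt_le, Q_pos; lra.
Qed.

Lemma gf_deriv al x : 0 < al < / sqrt 2 ->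
  is_derive (gf al) x (4 * (al ^ 2 - bet al ^ 2) * sin x * cos x / gf al x).
Proof.
  intros H. destruct (bet_facts al H) as [_ Hb]. pose proof (Q_pos (bet al) al x ltac:(lra) ltac:(lra)) as HQ.
  unfold gf in *. unfold Q in *. auto_derive.
  { repeat split; try exact I; lra. }
  assert (0 < sqrt ((bet al * cos x) ^ 2 + (al * sin x) ^ 2)) by (apply sqrt_lt_R0; lra).
  replace (bet al * cos x * (bet al * cos x * 1) + al * sin x * (al * sin x * 1)) with ((bet al * cos x) ^ 2 + (al * sin x) ^ 2) by ring.
  field. lra.
Qed.

Lemma v2_deriv al x : 0 < al < / sqrt 2 ->
  is_derive (fun t => msq al * cos t * gf al t) x (hf (msq al * sin x) * / gf al x).
Proof.
  intros H. destruct (bet_facts al H) as [E4 Hb]. pose proof (al2_lt al H) as Ha2.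
  pose proof (gf_ge al x H) as Hg.
  assert (Hgd : forall t, is_derive (gf al) t (4 * (al ^ 2 - bet al ^ 2) * sin t * cos t / gf al t)) by (intro; apply gf_deriv; auto).
  assert (Hm : msq al ^ 2 = 1 - 2 * al ^ 2) by (unfold msq; apply pow2_sqrt; lra).
  pose proof (gf_sq al x H) as Hg2.
  pose proof (sin2_cos2 x) as Hcs. unfold Rsqr in Hcs.
  auto_derive. exd.
  rewrite (Derive_eq _ _ Hgd).
  set (g := gf al x) in *. set (m := msq al) in *. set (s := sin x) in *. set (c := cos x) in *. set (B := bet al) in *.
  assert (Hnum : m * (- s * g ^ 2 + 4 * (al ^ 2 - B ^ 2) * s * c * c) = -2 * (m * s) * (1 - (m * s) ^ 2)).
  { rewrite Hg2.
    assert (Hdec : m * (- s * (4 * ((B * c) ^ 2 + (al * s) ^ 2)) + 4 * (al ^ 2 - B ^ 2) * s * c * c) - (-2 * (m * s) * (1 - (m * s) ^ 2))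
       = m * (-2 * s * c ^ 2 * (4 * B ^ 2 - (1 + 2 * al ^ 2)) - 2 * s ^ 3 * (m ^ 2 - (1 - 2 * al ^ 2)) + 2 * s * (1 - (s * s + c * c)))) by ring.
    rewrite E4, Hm, Hcs in Hdec. lra. }
  apply (Rmult_eq_reg_r g); [|lra].
  transitivity (m * (- s * g ^ 2 + 4 * (al ^ 2 - B ^ 2) * s * c * c) / g * g).
  { field. lra. }
  rewrite Hnum. unfold hf. field. lra.
Qed.

Lemma is_derive_eq (f : R -> R) (x l l' : R) : is_derive f x l -> l = l' -> is_derive f x l'.
Proof. intros H E; subst; exact H. Qed.

Lemma is_derive_Ropp (f : R -> R) (x l : R) : is_derive f x l -> is_derive (fun t => - f t) x (- l).
Proof. intro H. apply is_derive_Reals. apply is_derive_Reals in H. apply (derivable_pt_lim_opp f x l H). Qed.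

Lemma is_derive_Rminus (f g : R -> R) (x l k : R) : is_derive f x l -> is_derive g x k -> is_derive (fun t => f t - g t) x (l - k).
Proof. intros H1 H2. apply is_derive_Reals. apply is_derive_Reals in H1. apply is_derive_Reals in H2. apply (derivable_pt_lim_minus f g x l k H1 H2). Qed.

Lemma chain (f g : R -> R) df dg x : is_derive f (g x) df -> is_derive g x dg ->
  is_derive (fun t => f (g t)) x (df * dg).
Proof.
  intros Hf Hg. apply (is_derive_eq _ _ (scal dg df)). apply (is_derive_comp f g x df dg Hf Hg).
  rewrite scalR. apply Rmult_comm.
Qed.

Lemma hf_bound u : Rabs u <= 1 -> Rabs (hf u) <= 2.
Proof.
  intros H. unfold hf. apply Rabs_le_between in H.
  assert (0 <= 1 - u ^ 2 <= 1) by (split; nra).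
  rewrite Rabs_mult, Rabs_mult. rewrite (Rabs_left (-2)) by lra.
  rewrite (Rabs_right (1 - u ^ 2)) by lra.
  assert (Rabs u <= 1) by (apply Rabs_le; lra). pose proof (Rabs_pos u). nra.
Qed.

Lemma Phi_0 al : Phi al 0 = 0.
Proof. unfold Phi. rewrite RInt_point. reflexivity. Qed.

Lemma gf_PI al : gf al PI = gf al 0.
Proof. unfold gf, Q. rewrite cos_PI, sin_PI, cos_0, sin_0. f_equal. f_equal. ring. Qed.

Lemma ode_main (x y z : R -> R) al x0 y0 :
  0 < al < / sqrt 2 -> x0 > y0 -> y0 > 0 -> x0 ^ 2 + y0 ^ 2 = 1 -> x0 * y0 = al ^ 2 ->
  solves_system x y z x0 y0 ->
  z 0 = 0 /\ (forall t, z (t + Lalpha al / 2) = - z t) /\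
  (forall s, Rabs (z s - sqrt (1 - 4 * al ^ 4) * s) <= 2 * s ^ 2).
Proof.
  intros Hal Hxy Hy0 H1 H2 Hs.
  pose proof (conserv x y z x0 y0 Hs) as [_ Hc].
  pose proof (w_deriv x y z x0 y0 Hs H1) as Hwd.
  destruct Hs as [Hx0 [Hy0' [Hz0 [Hx [Hy Hz]]]]].
  set (w := fun t => x t ^ 2 - y t ^ 2) in *.
  set (c := sqrt (1 - 4 * al ^ 4)).
  pose proof (al2_lt al Hal) as Ha2.
  destruct (bet_facts al Hal) as [E4 Hb].
  assert (Hzd : forall t, is_derive z t (w t)) by exact Hz.
  assert (Hzb : forall t, Rabs (z t) <= 1).
  { intro t. specialize (Hc t). rewrite H1 in Hc. apply Rabs_le.
    pose proof (pow2_ge_0 (x t)); pose proof (pow2_ge_0 (y t)). split; nra. }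
  assert (Hw0 : w 0 = c).
  { unfold w, c. rewrite Hx0, Hy0'.
    replace (1 - 4 * al ^ 4) with ((x0 ^ 2 - y0 ^ 2) ^ 2).
    - rewrite sqrt_pow2; [reflexivity|nra].
    - transitivity ((x0 ^ 2 + y0 ^ 2) ^ 2 - 4 * (x0 * y0) ^ 2); [ring|]. rewrite H1, H2. ring. }
  set (m := msq al).
  assert (Hm : m ^ 2 = 1 - 2 * al ^ 2) by (unfold m, msq; apply pow2_sqrt; lra).
  assert (Hm0 : 0 <= m) by (unfold m, msq; apply sqrt_pos).
  assert (Hm1 : m <= 1) by nra.
  assert (Hg0 : m * gf al 0 = c).
  { unfold gf, Q, c, m, msq. rewrite cos_0, sin_0.
    replace ((bet al * 1) ^ 2 + (al * 0) ^ 2) with (bet al ^ 2) by ring.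
    rewrite sqrt_pow2 by lra.
    replace (1 - 4 * al ^ 4) with ((1 - 2 * al ^ 2) * (4 * bet al ^ 2)) by (rewrite E4; ring).
    rewrite sqrt_mult_alt by lra. replace (4 * bet al ^ 2) with ((2 * bet al) ^ 2) by ring.
    rewrite sqrt_pow2 by lra. ring. }
  assert (HPI : z (Phi al PI) = m * sin PI /\ w (Phi al PI) = m * cos PI * gf al PI).
  { apply (uniq2 (fun p => z (Phi al p)) (fun p => w (Phi al p)) (fun p => m * sin p) (fun p => m * cos p * gf al p)
                  (fun p => / gf al p) (/ (2 * al))).
  { intro p. apply chain; [apply Hzd | apply Phi_deriv; auto]. }
  { intro p. apply chain; [apply Hwd | apply Phi_deriv; auto]. }
  { intro p. apply (is_derive_eq _ _ (m * cos p)).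
    - auto_derive; auto. ring.
    - pose proof (gf_ge al p Hal). field. lra. }
  { intro p. apply v2_deriv; auto. }
  { intro p. pose proof (gf_ge al p Hal). split.
    - apply Rlt_le, Rinv_0_lt_compat; lra.
    - apply Rinv_le_contravar; lra. }
  { intro p. apply Hzb. }
  { intro p. rewrite Rabs_mult. assert (Hsb : Rabs (sin p) <= 1) by (apply Rabs_le; apply SIN_bound). rewrite (Rabs_right m) by lra.
    pose proof (Rabs_pos (sin p)). 
    apply (Rle_trans _ (1 * 1)); [apply Rmult_le_compat; lra | lra]. }
  { simpl. rewrite Phi_0, sin_0. rewrite Hz0. ring. }
  { simpl. rewrite Phi_0, cos_0, Hw0, <- Hg0. ring. } }
  destruct HPI as [HzPI HwPI]. rewrite sin_PI in HzPI. rewrite cos_PI, gf_PI in HwPI. replace (m * -1 * gf al 0) with (- (m * gf al 0)) in HwPI by ring. rewrite Hg0 in HwPI.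
  rewrite (Phi_PI al Hal) in HzPI, HwPI.
  set (tau := Lalpha al / 2) in *.
  split; [exact Hz0|split].
  -
    intro t.
    assert (Ht : z (t + tau) = - z t /\ w (t + tau) = - w t).
    { apply (uniq2 (fun t => z (t + tau)) (fun t => w (t + tau)) (fun t => - z t) (fun t => - w t)
                  (fun _ => 1) 1).
    { intro s. apply (is_derive_eq _ _ (w (s + tau) * 1)). apply chain. apply Hzd. auto_derive; auto; ring. reflexivity. }
    { intro s. apply (is_derive_eq _ _ (hf (z (s + tau)) * 1)). apply chain. apply Hwd. auto_derive; auto; ring. reflexivity. }
    { intro s. apply (is_derive_eq _ _ (- w s)). apply is_derive_Ropp. apply Hzd. ring. }
    { intro s. apply (is_derive_eq _ _ (- hf (z s))). apply is_derive_Ropp. apply Hwd. unfold hf. ring. }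
    { intro; lra. }
    { intro s. apply Hzb. }
    { intro s. rewrite Rabs_Ropp. apply Hzb. }
    { simpl. rewrite Rplus_0_l, HzPI, Hz0. ring. }
    { simpl. rewrite Rplus_0_l, HwPI, Hw0. ring. } }
    apply Ht.
  - intro s.
    assert (Hwb : forall r, Rabs (w r - c) <= 2 * Rabs r).
    { intro r. rewrite <- Hw0. replace (Rabs r) with (Rabs (r - 0)) by (f_equal; ring).
      apply (mvt_bound w (fun t => hf (z t)) 0 r 2 Hwd). intros; apply hf_bound, Hzb. }
    assert (Hf := mvt_bound (fun t => z t - c * t) (fun t => w t - c) 0 s (2 * Rabs s)).
    simpl in Hf. rewrite Hz0 in Hf.
    replace (z s - c * s - (0 - c * 0)) with (z s - c * s) in Hf by ring.
    replace (2 * s ^ 2) with (2 * Rabs s * Rabs (s - 0)).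
    + apply Hf.
      * intro t. apply (is_derive_eq _ _ (w t - c * 1)). apply is_derive_Rminus. apply Hzd.
        auto_derive; auto. ring.
      * intros t Ht. eapply Rle_trans. apply Hwb. apply Rmult_le_compat_l; [lra|].
        unfold Rmin, Rmax in Ht. destruct (Rle_dec 0 s) as [Hs0|Hs0].
        -- rewrite (Rabs_pos_eq t) by lra. rewrite (Rabs_pos_eq s) by lra. lra.
        -- rewrite (Rabs_left1 t) by lra. rewrite (Rabs_left1 s) by lra. lra.
    + rewrite <- (pow2_abs s). unfold Rminus. rewrite Ropp_0, Rplus_0_r. ring.
Qed.

Definition cA (al : R) : R := sqrt (1 - 4 * al ^ 4).

Lemma fam (xs ys zs : R -> R -> R) : is_solution_family xs ys zs ->
  forall M, PI * sqrt 2 < M -> exists al, 0 < al < / sqrt 2 /\ Lalpha al = M /\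
    zs M 0 = 0 /\ (forall t, zs M (t + M) = zs M t) /\ (forall t, zs M (t + M / 2) = - zs M t) /\
    (forall s, Rabs (zs M s - cA al * s) <= 2 * s ^ 2).
Proof.
  intros H M HM. destruct (H M HM) as [al [x0 [y0 [Hal [HL [Hxy [Hy0 [H1 [H2 Hs]]]]]]]]].
  destruct (ode_main _ _ _ al x0 y0 Hal Hxy Hy0 H1 H2 Hs) as [Hz0 [Hh Hb]].
  rewrite HL in Hh. exists al. repeat split; auto; try lra.
  intro t. replace (t + M) with ((t + M / 2) + M / 2) by field. rewrite !Hh. ring.
Qed.

Lemma Lalpha_bet al : Lalpha al = PI / AGM al (bet al).
Proof. reflexivity. Qed.

Lemma Lalpha_decr a a' : 0 < a -> a < a' -> a' < / sqrt 2 -> Lalpha a' < Lalpha a.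
Proof.
  intros Ha Haa Ha'.
  assert (Hal : 0 < a < / sqrt 2) by lra. assert (Hal' : 0 < a' < / sqrt 2) by lra.
  destruct (bet_facts a Hal) as [_ Hb]. destruct (bet_facts a' Hal') as [_ Hb'].
  assert (Hbb : bet a < bet a').
  { unfold bet. apply Rmult_lt_compat_r; [lra|]. apply sqrt_lt_1_alt. split; nra. }
  set (mu := Rmin (a' / a) (bet a' / bet a)).
  assert (Hmu : 1 < mu).
  { unfold mu. apply Rmin_case; [apply (Rmult_lt_reg_r a)|apply (Rmult_lt_reg_r (bet a))]; try lra;
    unfold Rdiv; rewrite Rmult_assoc, Rinv_l; lra. }
  assert (Hm1 : mu * a <= a').
  { unfold mu. apply (Rle_trans _ (a' / a * a)). apply Rmult_le_compat_r. lra. apply Rmin_l. right; field; lra. }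
  assert (Hm2 : mu * bet a <= bet a').
  { unfold mu. apply (Rle_trans _ (bet a' / bet a * bet a)). apply Rmult_le_compat_r. lra. apply Rmin_r. right; field; lra. }
  pose proof (agm_monotone (mu * a) (mu * bet a) a' (bet a') ltac:(nra) ltac:(nra) Hm1 Hm2) as HA.
  rewrite agm_hom in HA by lra.
  pose proof (agm_pos_lim a (bet a) ltac:(lra) ltac:(lra)) as HP.
  rewrite !Lalpha_bet. pose proof PI_RGT_0.
  apply Rmult_lt_compat_l; [lra|]. apply Rinv_lt_contravar. 
  - apply Rmult_lt_0_compat; nra.
  - nra.
Qed.

Lemma alpha_le al L : 0 < al < / sqrt 2 -> Lalpha al = L -> al <= PI / L.
Proof.
  intros Hal HL. destruct (bet_facts al Hal) as [_ Hb].
  pose proof (agm_le_min al (bet al) ltac:(lra) ltac:(lra)) as Hm.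
  rewrite Rmin_left in Hm by lra. rewrite Lalpha_bet in HL.
  pose proof (agm_pos_lim al (bet al) ltac:(lra) ltac:(lra)). pose proof PI_RGT_0.
  subst L. unfold Rdiv. rewrite Rinv_mult, Rinv_inv. 
  replace al with (PI * / PI * al) at 1 by (field; lra).
  rewrite Rmult_assoc. apply Rmult_le_compat_l; [lra|]. apply Rmult_le_compat_l; [|lra].
  apply Rlt_le, Rinv_0_lt_compat; lra.
Qed.

Lemma cA_facts al : 0 < al < / sqrt 2 -> 0 < cA al <= 1 /\ 1 - cA al <= 4 * al ^ 4.
Proof.
  intros Hal. pose proof (al2_lt al Hal).
  assert (H4 : 0 < 1 - 4 * al ^ 4 <= 1).
  { assert (al ^ 4 = (al ^ 2) ^ 2) by ring. pose proof (pow2_ge_0 (al ^ 2)). split; nra. }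
  unfold cA. split; [split|].
  - apply sqrt_lt_R0; lra.
  - apply (Rle_trans _ (sqrt 1)); [apply sqrt_le_1_alt; lra | rewrite sqrt_1; lra].
  - pose proof (sqrt_sqrt (1 - 4 * al ^ 4) ltac:(lra)).
    assert (sqrt (1 - 4 * al ^ 4) <= 1) by (apply (Rle_trans _ (sqrt 1)); [apply sqrt_le_1_alt; lra | rewrite sqrt_1; lra]).
    pose proof (sqrt_pos (1 - 4 * al ^ 4)).
    assert (1 - 4 * al ^ 4 <= sqrt (1 - 4 * al ^ 4)) by nra. lra.
Qed.

Lemma cA_lip a b : 0 < a < / sqrt 2 -> 0 < b < / sqrt 2 -> Rabs (cA a - cA b) <= 8 * Rabs (a - b) / cA b.
Proof.
  intros Ha Hb. pose proof (al2_lt a Ha); pose proof (al2_lt b Hb).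
  destruct (cA_facts a Ha) as [[Hca _] _]. destruct (cA_facts b Hb) as [[Hcb _] _].
  assert (E : (cA a - cA b) * (cA a + cA b) = 4 * (b ^ 4 - a ^ 4)).
  { unfold cA. replace ((sqrt (1 - 4 * a ^ 4) - sqrt (1 - 4 * b ^ 4)) * (sqrt (1 - 4 * a ^ 4) + sqrt (1 - 4 * b ^ 4)))
      with (sqrt (1 - 4 * a ^ 4) ^ 2 - sqrt (1 - 4 * b ^ 4) ^ 2) by ring.
    rewrite !pow2_sqrt. ring.
    all: assert (b ^ 4 = (b ^ 2) ^ 2) by ring; assert (a ^ 4 = (a ^ 2) ^ 2) by ring; nra. }
  assert (E2 : b ^ 4 - a ^ 4 = (b - a) * ((b + a) * (b ^ 2 + a ^ 2))) by ring.
  assert (Hs : 0 <= (b + a) * (b ^ 2 + a ^ 2) <= 2).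
  { assert (a < 1) by (destruct (Rlt_or_le a 1); auto; nra).
    assert (b < 1) by (destruct (Rlt_or_le b 1); auto; nra).
    assert (0 <= b ^ 2 + a ^ 2 <= 1) by (split; nra).
    split. apply Rmult_le_pos; lra.
    replace 2 with (2 * 1) by ring. apply Rmult_le_compat; lra. }
  assert (Hd : cA a - cA b = 4 * (b ^ 4 - a ^ 4) / (cA a + cA b)) by (rewrite <- E; field; lra).
  rewrite Hd, E2.
  set (K := (b + a) * (b ^ 2 + a ^ 2)) in *. set (S := cA a + cA b).
  replace (4 * ((b - a) * K) / S) with ((b - a) * (4 * K / S)) by (unfold S; field; lra).
  assert (HKS : 0 <= 4 * K / S <= 8 / cA b).
  { split. apply Rle_mult_inv_pos; unfold S; lra.
    unfold Rdiv. apply Rmult_le_compat; try lra. apply Rlt_le, Rinv_0_lt_compat; unfold S; lra.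
    apply Rinv_le_contravar; unfold S; lra. }
  rewrite Rabs_mult. rewrite (Rabs_right (4 * K / S)) by lra.
  rewrite <- Rabs_Ropp. replace (- (b - a)) with (a - b) by ring.
  pose proof (Rabs_pos (a - b)).
  apply (Rle_trans _ (Rabs (a - b) * (8 / cA b))). apply Rmult_le_compat_l; lra. right; unfold Rdiv; ring.
Qed.

Lemma Lalpha_le a a' : 0 < a -> a <= a' -> a' < / sqrt 2 -> Lalpha a' <= Lalpha a.
Proof.
  intros H1 H2 H3. destruct (Req_dec a a') as [E|E]. subst; lra.
  left. apply Lalpha_decr; lra.
Qed.

Lemma alpha_cont aL : 0 < aL < / sqrt 2 ->
  forall eta, 0 < eta -> exists delta, 0 < delta /\
    forall a, 0 < a < / sqrt 2 -> Rabs (Lalpha a - Lalpha aL) < delta -> Rabs (a - aL) < eta.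
Proof.
  intros HaL eta Heta.
  set (e := Rmin (eta / 2) (Rmin (aL / 2) ((/ sqrt 2 - aL) / 2))).
  assert (He : 0 < e /\ e <= eta / 2 /\ e <= aL / 2 /\ e <= (/ sqrt 2 - aL) / 2).
  { unfold e. repeat split.
    - repeat apply Rmin_case; lra.
    - apply Rmin_l.
    - eapply Rle_trans; [apply Rmin_r|apply Rmin_l].
    - eapply Rle_trans; [apply Rmin_r|apply Rmin_r]. }
  set (M1 := Lalpha (aL + e)). set (M2 := Lalpha (aL - e)).
  assert (HM1 : M1 < Lalpha aL) by (apply Lalpha_decr; lra).
  assert (HM2 : Lalpha aL < M2) by (apply Lalpha_decr; lra).
  exists (Rmin (Lalpha aL - M1) (M2 - Lalpha aL)). split.
  { apply Rmin_case; lra. }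
  intros a Ha Hd.
  pose proof (Rmin_l (Lalpha aL - M1) (M2 - Lalpha aL)). pose proof (Rmin_r (Lalpha aL - M1) (M2 - Lalpha aL)).
  apply Rabs_def2 in Hd. apply Rabs_def1.
  - destruct (Rlt_or_le a (aL + e)) as [Hl|Hl]; [lra|].
    exfalso. assert (Lalpha a <= M1) by (apply Lalpha_le; lra). lra.
  - destruct (Rlt_or_le (aL - e) a) as [Hl|Hl]; [lra|].
    exfalso. assert (M2 <= Lalpha a) by (apply Lalpha_le; lra). lra.
Qed.

Lemma deriv_main (xs ys zs : R -> R -> R) : is_solution_family xs ys zs ->
  forall L aL, PI * sqrt 2 < L -> 0 < aL < / sqrt 2 -> Lalpha aL = L ->
  is_derive (fun M => zs M L) L (- cA aL) /\ is_derive (fun M => zs M (L / 2)) L (cA aL / 2).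
Proof.
  intros Hfam L aL HL HaL HLa.
  destruct (cA_facts aL HaL) as [[HcL _] _].
  assert (Hz : forall M, PI * sqrt 2 < M -> forall a, 0 < a < / sqrt 2 -> Lalpha a = M ->
     zs M 0 = 0 /\ (forall t, zs M (t + M) = zs M t) /\ (forall t, zs M (t + M / 2) = - zs M t) /\
    (forall s, Rabs (zs M s - cA a * s) <= 2 * s ^ 2)).
  { intros M HM a Ha HaM. destruct (fam xs ys zs Hfam M HM) as [a' [Ha' [HaM' R1]]].
    assert (a = a').
    { destruct (Rtotal_order a a') as [Hl|[Hl|Hl]]; auto; exfalso.
      - pose proof (Lalpha_decr a a' ltac:(lra) Hl ltac:(lra)). lra.
      - pose proof (Lalpha_decr a' a ltac:(lra) Hl ltac:(lra)). lra. }
    subst a'. exact R1. }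
  destruct (Hz L HL aL HaL HLa) as [HL0 [HLp [HLh _]]].
  assert (HfL : zs L L = 0) by (rewrite <- (Rplus_0_l L) at 2; rewrite HLp; exact HL0).
  assert (HfL2 : zs L (L / 2) = 0) by (rewrite <- (Rplus_0_l (L / 2)); rewrite HLh, HL0; ring).
  assert (Hest : forall eps, 0 < eps -> exists delta, 0 < delta /\ forall h, h <> 0 -> Rabs h < delta ->
            PI * sqrt 2 < L + h /\ exists a, 0 < a < / sqrt 2 /\ Lalpha a = L + h /\ Rabs (cA a - cA aL) < eps).
  { intros eps Heps.
    destruct (alpha_cont aL HaL (eps * cA aL / 16)) as [d1 [Hd1 Hc]].
    { apply Rmult_lt_0_compat; [apply Rmult_lt_0_compat|]; lra. }
    exists (Rmin d1 (L - PI * sqrt 2)). split. { apply Rmin_case; lra. }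
    intros h Hh0 Hh.
    pose proof (Rmin_l d1 (L - PI * sqrt 2)). pose proof (Rmin_r d1 (L - PI * sqrt 2)).
    assert (HM : PI * sqrt 2 < L + h) by (apply Rabs_def2 in Hh; lra).
    split; auto.
    destruct (fam xs ys zs Hfam (L + h) HM) as [a [Ha [HaM _]]].
    exists a. repeat split; try lra.
    assert (Rabs (a - aL) < eps * cA aL / 16).
    { apply Hc; auto. rewrite HaM, HLa. replace (L + h - L) with h by ring. lra. }
    eapply Rle_lt_trans. apply cA_lip; auto.
    apply (Rmult_lt_reg_r (cA aL)); auto. unfold Rdiv. rewrite Rmult_assoc, Rinv_l by lra.
    pose proof (Rabs_pos (a - aL)). nra. }
  split; apply is_derive_Reals; intros eps Heps.
  - destruct (Hest (eps / 2) ltac:(lra)) as [d [Hd Hh]].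
    exists (mkposreal (Rmin d (eps / 8)) ltac:(apply Rmin_case; lra)). simpl. intros h Hh0 Hhd.
    pose proof (Rmin_l d (eps / 8)). pose proof (Rmin_r d (eps / 8)).
    destruct (Hh h Hh0 ltac:(lra)) as [HM [a [Ha [HaM Hca]]]].
    destruct (Hz (L + h) HM a Ha HaM) as [_ [Hp [_ Hb]]].
    assert (E : zs (L + h) L = zs (L + h) (- h)) by (rewrite <- (Hp (- h)); f_equal; ring).
    rewrite E, HfL. specialize (Hb (- h)).
    assert (Hq : Rabs ((zs (L + h) (- h) - 0) / h - - cA a) <= 2 * Rabs h).
    { replace ((zs (L + h) (- h) - 0) / h - - cA a) with ((zs (L + h) (- h) - cA a * - h) / h) by (field; auto).
      unfold Rdiv. rewrite Rabs_mult, Rabs_Rinv by auto.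
      apply (Rmult_le_reg_r (Rabs h)). apply Rabs_pos_lt; auto.
      rewrite Rmult_assoc, Rinv_l by (apply Rabs_no_R0; auto). rewrite Rmult_1_r.
      rewrite Rmult_assoc. rewrite <- (pow2_abs (- h)) in Hb. rewrite Rabs_Ropp in Hb.
      replace (2 * (Rabs h * Rabs h)) with (2 * Rabs h ^ 2) by ring. exact Hb. }
    replace ((zs (L + h) (- h) - 0) / h - - cA aL) with (((zs (L + h) (- h) - 0) / h - - cA a) + (cA aL - cA a)) by ring.
    eapply Rle_lt_trans. apply Rabs_triang. rewrite <- Rabs_Ropp in Hca. replace (- (cA a - cA aL)) with (cA aL - cA a) in Hca by ring.
    lra.
  - destruct (Hest (eps / 2) ltac:(lra)) as [d [Hd Hh]].
    exists (mkposreal (Rmin d (eps / 8)) ltac:(apply Rmin_case; lra)). simpl. intros h Hh0 Hhd.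
    pose proof (Rmin_l d (eps / 8)). pose proof (Rmin_r d (eps / 8)).
    destruct (Hh h Hh0 ltac:(lra)) as [HM [a [Ha [HaM Hca]]]].
    destruct (Hz (L + h) HM a Ha HaM) as [_ [_ [Hp Hb]]].
    assert (E : zs (L + h) (L / 2) = - zs (L + h) (- h / 2)) by (rewrite <- (Hp (- h / 2)); f_equal; field).
    rewrite E, HfL2. specialize (Hb (- h / 2)).
    assert (Hq : Rabs ((- zs (L + h) (- h / 2) - 0) / h - cA a / 2) <= 2 * Rabs h).
    { replace ((- zs (L + h) (- h / 2) - 0) / h - cA a / 2) with (- (zs (L + h) (- h / 2) - cA a * (- h / 2)) / h) by (field; auto).
      unfold Rdiv. rewrite Rabs_mult, Rabs_Rinv by auto. rewrite Rabs_Ropp.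
      apply (Rmult_le_reg_r (Rabs h)). apply Rabs_pos_lt; auto.
      rewrite Rmult_assoc, Rinv_l by (apply Rabs_no_R0; auto). rewrite Rmult_1_r.
      eapply Rle_trans. exact Hb. rewrite <- (pow2_abs (- h / 2)).
      unfold Rdiv. rewrite Rabs_mult, Rabs_Ropp, (Rabs_right (/ 2)) by lra.
      pose proof (Rabs_pos h). nra. }
    replace ((- zs (L + h) (- h / 2) - 0) / h - cA aL / 2) with (((- zs (L + h) (- h / 2) - 0) / h - cA a / 2) + (cA a - cA aL) / 2) by (field; auto).
    eapply Rle_lt_trans. apply Rabs_triang.
    assert (Rabs ((cA a - cA aL) / 2) = Rabs (cA a - cA aL) / 2) by (unfold Rdiv; rewrite Rabs_mult, (Rabs_right (/ 2)) by lra; reflexivity).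
    lra.
Qed.

Theorem lemma8p6 (xs ys zs : R -> R -> R) :
  is_solution_family xs ys zs ->
  Rbar_locally p_infty
    (fun L => ex_derive (fun M => zs M L) L /\ ex_derive (fun M => zs M (L / 2)) L) /\
  is_lim (fun L => ZL zs L L) p_infty (-1) /\
  is_lim (fun L => ZL zs L (L / 2)) p_infty (1 / 2).
Proof.
  intros Hfam.
  assert (Hd : forall L, PI * sqrt 2 < L -> exists aL, 0 < aL < / sqrt 2 /\ 0 <= 1 - cA aL <= 4 * PI / L /\
     is_derive (fun M => zs M L) L (- cA aL) /\ is_derive (fun M => zs M (L / 2)) L (cA aL / 2)).
  { intros L HL. destruct (fam xs ys zs Hfam L HL) as [aL [HaL [HLa _]]]. exists aL.
    destruct (deriv_main xs ys zs Hfam L aL HL HaL HLa) as [D1 D2].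
    split; auto. split; auto.
    destruct (cA_facts aL HaL) as [[_ Hc1] Hc2].
    pose proof (alpha_le aL L HaL HLa).
    assert (aL < 1).
    { pose proof (al2_lt aL HaL). destruct (Rlt_or_le aL 1); auto. nra. }
    assert (aL ^ 4 <= aL).
    { assert (aL ^ 4 = aL * aL ^ 3) by ring. assert (aL ^ 3 <= 1).
      { assert (aL ^ 3 = aL * (aL * aL)) by ring. assert (aL * aL <= 1) by nra. nra. }
      nra. }
    split; [lra|]. unfold Rdiv in *. lra. }
  assert (HPI : 0 < PI * sqrt 2) by (apply Rmult_lt_0_compat; [apply PI_RGT_0|apply sqrt_lt_R0; lra]).
  split; [|split].
  - exists (PI * sqrt 2). intros L HL. destruct (Hd L HL) as [aL [_ [_ [H1 H2]]]].
    split; eexists; eauto.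
  - apply is_lim_spec. intro eps. simpl. exists (Rmax (PI * sqrt 2) (4 * PI / eps)). intros L HL.
    pose proof (Rmax_l (PI * sqrt 2) (4 * PI / eps)). pose proof (Rmax_r (PI * sqrt 2) (4 * PI / eps)).
    destruct (Hd L ltac:(lra)) as [aL [_ [Hb [H1 _]]]].
    unfold ZL. replace (Derive (fun M => zs M L) L) with (- cA aL) by (symmetry; apply is_derive_unique; exact H1).
    pose proof (cond_pos eps). pose proof PI_RGT_0.
    assert (4 * PI / L < eps).
    { apply (Rmult_lt_reg_r L); [lra|]. unfold Rdiv. rewrite Rmult_assoc, Rinv_l by lra.
      assert (4 * PI / eps < L) by lra. apply (Rmult_lt_reg_r (/ eps)). apply Rinv_0_lt_compat; lra.
      replace (eps * L * / eps) with L by (field; lra). unfold Rdiv in H4. lra. }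
    rewrite Rabs_pos_eq by lra. lra.
  - apply is_lim_spec. intro eps. simpl. exists (Rmax (PI * sqrt 2) (4 * PI / eps)). intros L HL.
    pose proof (Rmax_l (PI * sqrt 2) (4 * PI / eps)). pose proof (Rmax_r (PI * sqrt 2) (4 * PI / eps)).
    destruct (Hd L ltac:(lra)) as [aL [_ [Hb [_ H1]]]].
    unfold ZL. replace (Derive (fun M => zs M (L / 2)) L) with (cA aL / 2) by (symmetry; apply is_derive_unique; exact H1).
    pose proof (cond_pos eps). pose proof PI_RGT_0.
    assert (4 * PI / L < eps).
    { apply (Rmult_lt_reg_r L); [lra|]. unfold Rdiv. rewrite Rmult_assoc, Rinv_l by lra.
      assert (4 * PI / eps < L) by lra. apply (Rmult_lt_reg_r (/ eps)). apply Rinv_0_lt_compat; lra.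
      replace (eps * L * / eps) with L by (field; lra). unfold Rdiv in H4. lra. }
    rewrite Rabs_left1 by lra. lra.
Qed.
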